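(* Let $\overleftarrow\sigma=(\sigma_n:\mathcal A_{n+1}^*\to\mathcal A_n^* )_{n\ge0}$ be an everywhere growing directive sequence and $\overleftarrow v=(\vec v_n)_{n\ge0}$ a vector tower over $\overleftarrow\sigma$. For each $k\ge0$ let $\mu_k=\mathfrak m_k(\overleftarrow v\dagger_k)\in\mathcal M(X_k)$. Then $\sigma_k^{\mathcal M}(\mu_{k+1})=\mu_k$ for all $k\ge0$, i.e. $(\mu_k)_{k\ge0}$ is a measure tower on $\overleftarrow\sigma$.
   Context: Directive sequence: non-erasing monoid morphisms $\sigma_n:\mathcal A_{n+1}^*\to\mathcal A_n^*$ over finite alphabets; $\sigma_{[n,m)}=\sigma_n\circ\cdots\circ\sigma_{m-1}$; everywhere growing means $\min_{a\in\mathcal A_n}|\sigma_{[0,n)}(a)|\to\infty$. The truncated sequence $\overleftarrow\sigma\dagger_k=(\sigma_n)_{n\ge k}$; the level subshift $X_k\subseteq\mathcal A_k^{\mathbb Z}$ is the subshift generated by $\overleftarrow\sigma\dagger_k$, i.e. all $\mathbf x$ whose finite factors are factors of some $\sigma_{[k,n)}(a)$, $n>k$, $a\in\mathcal A_n$. $M(\sigma)=(|\sigma(a)|_b)_{b,a}$ is the incidence matrix. A vector tower is $(\vec v_n)$, $\vec v_n\in\mathbb R_{\ge0}^{\mathcal A_n}$, with $\vec v_n=M(\sigma_n)\vec v_{n+1}$; its truncation is $\overleftarrow v\dagger_k=(\vec v_n)_{n\ge k}$, a vector tower over $\overleftarrow\sigma\dagger_k$. The evaluation $\mathfrak m_k(\overleftarrow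 v\dagger_k)$ is the invariant measure $\mu$ on $X_k$ with $\mu([w])=\lim_{n\to\infty}\sum_{a\in\mathcal A_n}\vec v_n(a)|\sigma_{[k,n)}(a)|_w$ for $w\in\mathcal A_k^*$ ($|u|_w$ = number of possibly overlapping occurrences; $[w]=\{\mathbf x:\mathbf x_{[1,|w|]}=w\}$). $\mathcal M(Y)$ = finite shift-invariant Borel measures supported in $Y$. A measure tower on $\overleftarrow\sigma$ is a sequence $\mu_n\in\mathcal M(\mathcal A_n^{\mathbb Z})$ with $\mu_n=\sigma_n^{\mathcal M}(\mu_{n+1})$ for all $n$. Measure transfer for non-erasing $\sigma:\mathcal A^*\to\mathcal B^*$: with $\mathcal A_\sigma=\{a(k):1\le k\le|\sigma(a)|\}$, $\pi_\sigma(a)=a(1)\cdots a(|\sigma(a)|)$, $\alpha_\sigma(a(k))=$ $k$-th letter of $\sigma(a)$, and $\widehat w$ the shortest word in $\mathcal A^*$ whose $\pi_\sigma$-image contains $w\in\mathcal A_\sigma^*$ (with $\mu([\widehat w]):=0$ if none), $\sigma^{\mathcal M}(\mu)([w'])=\sum_{\alpha_\sigma(w)=w'}\mu([\widehat w])$. *)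

(* Defs.v *)
From HB Require Import structures.
From mathcomp Require Import all_boot all_order all_algebra.
From mathcomp Require Import all_classical all_reals all_analysis.
Set Implicit Arguments. Unset Strict Implicit. Unset Printing Implicit Defensive.
Import Order.TTheory GRing.Theory Num.Theory.
Local Open Scope ring_scope.

(* A monoid morphism A^* -> B^* is given by its letter images s : A -> seq B;
   its action on words is [morph s]. *)
Definition morph {A B : Type} (s : A -> seq B) (u : seq A) : seq B :=
  flatten (map s u).

Definition nonerasing {A B : Type} (s : A -> seq B) : Prop :=
  forall a, (0 < size (s a))%N.

(* |u|_w : number of (possibly overlapping) occurrences of w in u
   (used only for nonempty w). *)
Definition occ {T : eqType} (w u : seq T) : nat :=
  \sum_(i < (size u).+1) (take (size w) (drop i u) == w).

(* comp s k d = sigma_[k, k+d) = sigma_k o ... o sigma_(k+d-1),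
   a map (A_(d+k))^* -> (A_k)^*. *)
Fixpoint comp (A : nat -> finType) (s : forall n, A n.+1 -> seq (A n))
  (k d : nat) {struct d} : seq (A (d + k)) -> seq (A k) :=
  match d return seq (A (d + k)) -> seq (A k) with
  | 0 => fun u => u
  | d'.+1 => fun u => @comp A s k d' (morph (s (d' + k)) u)
  end.
Arguments comp {A} s k d u.

Definition everywhere_growing (A : nat -> finType)
  (s : forall n, A n.+1 -> seq (A n)) : Prop :=
  forall M : nat, exists N : nat, forall d : nat, (N <= d)%N ->
    forall a : A (d + 0)%N, (M <= size (comp s 0 d [:: a]))%N.

(* vector tower: v_n >= 0 and v_n = M(sigma_n) v_(n+1),
   M(sigma)_(b,a) = |sigma(a)|_b *)
Definition vector_tower (R : realType) (A : nat -> finType)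
  (s : forall n, A n.+1 -> seq (A n)) (v : forall n, A n -> R) : Prop :=
  forall n (b : A n), 0 <= v n b /\
    v n b = \sum_(a : A n.+1) (count_mem b (s n a))%:R * v n.+1 a.

(* A (shift-invariant, finite) measure on A^Z is represented by its values on
   cylinders [w] = {x : x_[1,|w|] = w}, i.e. by a function seq A -> R.
   Evaluation m_k(v dagger_k): mu([w]) = lim_n sum_(a in A_n) v_n(a) |sigma_[k,n)(a)|_w,
   written with n = d + k. *)
Definition level_meas (R : realType) (A : nat -> finType)
  (s : forall n, A n.+1 -> seq (A n)) (v : forall n, A n -> R) (k : nat)
  (w : seq (A k)) : R :=
  limn (fun d : nat =>
    \sum_(a : A (d + k)%N) v (d + k)%N a * (occ w (comp s k d [:: a]))%:R).
Arguments level_meas {R A} s v k w.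

(* Measure transfer. The letters of A_sigma: a(j), 0 <= j < |sigma(a)|
   (0-indexed version of a(1..|sigma(a)|)). *)
Section Transfer.
Variables (A B : finType) (s : A -> seq B).

Definition alpha (x : {a : A & 'I_(size (s a))}) : B :=
  tnth (in_tuple (s (tag x))) (tagged x).

Definition piw (u : seq A) : seq {a : A & 'I_(size (s a))} :=
  flatten (map (fun a => [seq @Tagged A a (fun a => 'I_(size (s a))) j
                         | j <- enum 'I_(size (s a))]) u).

Definition hat_exists (w : seq {a : A & 'I_(size (s a))}) (n : nat) : bool :=
  [exists u : n.-tuple A, infix w (piw u)].

(* hat w : the shortest word u in A^* with w a factor of pi_sigma(u), if any *)
Definition hat (w : seq {a : A & 'I_(size (s a))}) : option (seq A) :=
  match pselect (exists n, hat_exists w n) with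
  | left e =>
      omap (fun u : (@ex_minn (hat_exists w) e).-tuple A => val u)
           [pick u : (@ex_minn (hat_exists w) e).-tuple A | infix w (piw u)]
  | right _ => None
  end.

(* sigma^M(mu)([w']) = sum_{alpha(w) = w'} mu([hat w]), mu([hat w]) := 0 if none *)
Definition transfer (R : realType) (mu : seq A -> R) (w' : seq B) : R :=
  \sum_(t : (size w').-tuple {a : A & 'I_(size (s a))} | map alpha t == w')
     match hat t with Some u => mu u | None => 0 end.

End Transfer.
Arguments transfer {A B} s {R} mu w'.

(* Main.v *)
Require Import Defs.
From HB Require Import structures.
From mathcomp Require Import all_boot all_order all_algebra.
From mathcomp Require Import all_classical all_reals all_analysis.
From mathcomp Require Import zify.
Import Order.TTheory GRing.Theory Num.Theory.
Local Open Scope ring_scope.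
Set Implicit Arguments. Unset Strict Implicit. Unset Printing Implicit Defensive.

Section Occ.
Variable T : eqType.
Implicit Types w p q u : seq T.

Lemma occE w u : occ w u = (\sum_(i < (size u).+1) prefix w (drop i u))%N.
Proof. by rewrite /occ; apply: eq_bigr => i _; rewrite prefixE. Qed.

Lemma occ_nil w : w != [::] -> occ w [::] = 0%N.
Proof. by move=> wn; rewrite occE big_ord1 drop0 prefixs0 (negbTE wn). Qed.

Lemma occ_cons w x u : occ w (x :: u) = (prefix w (x :: u) + occ w u)%N.
Proof.
rewrite !occE big_ord_recl /=; congr addn.
Qed.

Lemma occ_cat w p q : occ w (p ++ q) =
  (\sum_(i < size p) prefix w (drop i p ++ q) + occ w q)%N.
Proof.
elim: p => [|x p IH]; first by rewrite big_ord0.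
rewrite cat_cons occ_cons IH /= big_ord_recl drop0 addnA; congr (_ + _ + _)%N.
Qed.

Lemma occ_le w u : w != [::] -> (occ w u <= size u)%N.
Proof.
move=> wn; elim: u => [|x u IH]; first by rewrite occ_nil.
rewrite occ_cons /=; case: (prefix w (x :: u)) => /=; lia.
Qed.

Lemma occ_cat_ge w p q : w != [::] -> (occ w p + occ w q <= occ w (p ++ q))%N.
Proof.
move=> wn; elim: p => [|x p IH]; first by rewrite occ_nil.
rewrite cat_cons !occ_cons -addnA leq_add //.
case hp: (prefix w (x :: p)) => //.
by rewrite -cat_cons (prefix_catl _ hp).
Qed.

Lemma occ_noinfix w u : w != [::] -> ~~ infix w u -> occ w u = 0%N.
Proof.
move=> wn; elim: u => [|x u IH]; first by rewrite occ_nil.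
rewrite infix_consl negb_or => /andP[h1 h2].
by rewrite occ_cons (negbTE h1) IH.
Qed.

Lemma occ_map (X : finType) (f : X -> T) w (P : seq X) :
  occ w (map f P) =
  (\sum_(t : (size w).-tuple X | map f t == w) occ t P)%N.
Proof.
rewrite /occ size_map exchange_big /=; apply: eq_bigr => i _.
rewrite -map_drop -map_take.
set x := take (size w) (drop i P).
have [hx|hx] := eqVneq (size x) (size w).
  pose tx : (size w).-tuple X := Tuple (introT eqP hx).
  rewrite big_mkcond (bigD1 tx) //= big1 ?addn0.
    by rewrite hx eqxx; case: (map f x == w).
  move=> t htx; rewrite size_tuple; case: ifP => // _.
  case: eqP => // ext; case/eqP: htx.
  by apply/val_inj => /=; rewrite -ext.
rewrite big1.
  case: eqP => // hm; case/eqP: hx; by rewrite -hm size_map.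
move=> t _; rewrite size_tuple; case: eqP => // ext; case/eqP: hx.
by rewrite /x ext size_tuple.
Qed.
End Occ.

Section Piw.
Variables (A B : finType) (s : A -> seq B).
Hypothesis hs : forall a, (0 < size (s a))%N.
Local Notation X := {a : A & 'I_(size (s a))}.

Definition blk (a : A) : seq X :=
  [seq @Tagged A a (fun a => 'I_(size (s a))) j | j <- enum 'I_(size (s a))].

Lemma piw_cons a u : piw s (a :: u) = blk a ++ piw s u.
Proof. by []. Qed.

Lemma piw_nil : piw s [::] = [::].
Proof. by []. Qed.

Lemma piw_cat u1 u2 : piw s (u1 ++ u2) = piw s u1 ++ piw s u2.
Proof. by rewrite /piw map_cat flatten_cat. Qed.

Lemma piw_rcons u c : piw s (rcons u c) = piw s u ++ blk c.
Proof. by rewrite -cats1 piw_cat piw_cons piw_nil cats0. Qed.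

Lemma size_blk a : size (blk a) = size (s a).
Proof. by rewrite size_map size_enum_ord. Qed.

Lemma blk_nonnil a : blk a != [::].
Proof. by rewrite -size_eq0 size_blk -lt0n hs. Qed.

Lemma nth_blk a i (x0 : X) : (i < size (s a))%N ->
  tag (nth x0 (blk a) i) = a /\ nat_of_ord (tagged (nth x0 (blk a) i)) = i.
Proof.
move=> hi; rewrite /blk (nth_map (Ordinal hi)) ?size_enum_ord //=.
by rewrite nth_enum_ord.
Qed.

Lemma tagE (x y : X) : tag x = tag y ->
  nat_of_ord (tagged x) = nat_of_ord (tagged y) -> x = y.
Proof.
case: x => a i; case: y => b j /= eab; subst b => eij.
by congr Tagged; apply: val_inj.
Qed.

Lemma blk_nth_eq a b i j (x0 : X) : (i < size (s a))%N -> (j < size (s b))%N ->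
  nth x0 (blk a) i = nth x0 (blk b) j -> a = b /\ i = j.
Proof.
move=> hi hj e; have [ta ia] := nth_blk x0 hi; have [tb ib] := nth_blk x0 hj.
by split; [rewrite -ta -tb e | rewrite -ia -ib e].
Qed.

Lemma alpha_blk a : map (@alpha _ _ s) (blk a) = s a.
Proof.
rewrite /blk -map_comp -[RHS](map_tnth_enum (in_tuple (s a))).
by apply: eq_map.
Qed.

Lemma morph_piw u : morph s u = map (@alpha _ _ s) (piw s u).
Proof.
elim: u => [|a u IH] //.
by rewrite piw_cons map_cat alpha_blk -IH.
Qed.

Lemma drop_cat_le (T : Type) n (p q : seq T) : (n <= size p)%N ->
  drop n (p ++ q) = drop n p ++ q.
Proof.
move=> h; rewrite drop_cat; case: ltnP => // h2.
have -> : n = size p by apply/eqP; rewrite eqn_leq h h2.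
by rewrite subnn drop0 drop_size.
Qed.

Lemma take_cat_le (T : Type) n (p q : seq T) : (n <= size p)%N ->
  take n (p ++ q) = take n p.
Proof.
move=> h; rewrite take_cat; case: ltnP => // h2.
have -> : n = size p by apply/eqP; rewrite eqn_leq h h2.
by rewrite subnn take0 cats0 take_size.
Qed.

Lemma prefix_nth0 (T : eqType) (x0 : T) p q : prefix p q -> (0 < size p)%N ->
  nth x0 p 0 = nth x0 q 0.
Proof.
rewrite prefixE => /eqP e hp.
by rewrite -[in LHS]e nth_take.
Qed.

Lemma nth0_blk_cat a i (x0 : X) Q : (i < size (s a))%N ->
  nth x0 (drop i (blk a) ++ Q) 0 = nth x0 (blk a) i.
Proof.
move=> hi; rewrite nth_cat size_drop size_blk subn_gt0 hi nth_drop addn0 //.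
Qed.

Lemma dec u3 c r U : (0 < r)%N ->
  prefix (piw s u3 ++ take r (blk c)) (piw s U) = prefix (rcons u3 c) U.
Proof.
move=> hr; have x0 : X := Tagged _ (Ordinal (hs c)).
elim: u3 U => [|x u3 IH] [|b U].
- rewrite piw_nil cat0s prefixs0 /= -size_eq0 size_take size_blk.
  by case: ltnP => h; apply/negbTE; rewrite -lt0n ?hr ?hs.
- rewrite piw_nil cat0s piw_cons /= prefix0s andbT.
  case: eqP => [->|ne].
    exact: prefix_trans (prefix_take _ _) (prefix_prefix _ _).
  apply/negbTE/negP => hp; apply: ne.
  have h1 : (0 < size (take r (blk c)))%N.
    by rewrite size_take size_blk; case: ifP => _; rewrite ?hr ?hs.
  have := prefix_nth0 x0 hp h1.
  rewrite -(drop0 (blk b)) nth0_blk_cat // nth_take //.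
  by case/blk_nth_eq; rewrite ?hs.
- rewrite piw_nil prefixs0 piw_cons -catA /=.
  by case: (blk x) (blk_nonnil x).
- rewrite piw_cons rcons_cons prefix_cons piw_cons -catA.
  case: eqP => [->|ne].
    by rewrite prefix_catr // IH eqxx.
  apply/negbTE/negP => hp; apply: ne.
  have := prefix_nth0 x0 hp; rewrite size_cat size_blk addn_gt0 hs /=.
  move/(_ isT).
  rewrite -(drop0 (blk b)) nth0_blk_cat // -(drop0 (blk x)) nth0_blk_cat //.
  by case/blk_nth_eq; rewrite ?hs.
Qed.


Lemma key (t : seq X) (u : seq A) : t != [::] -> infix t (piw s u) ->
  (forall u2, (size u2 < size u)%N -> ~~ infix t (piw s u2)) ->
  forall U, occ t (piw s U) = occ u U.
Proof.
move=> tn /infixP [P [Y hu]] hmin.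
case: u hu hmin => [|a u'] hu hmin.
  move/(congr1 size): hu; rewrite piw_nil /= !size_cat => e.
  move: tn; rewrite -size_eq0 => tn.
  move/eqP: e; rewrite eq_sym !addn_eq0 => /and3P[_ /eqP h _].
  by rewrite h in tn.
have hj : (size P < size (s a))%N.
  rewrite ltnNge; apply/negP => hle.
  have /negP := hmin u' (ltnSn _); apply.
  apply/infixP; exists (drop (size (s a)) P), Y.
  have := congr1 (drop (size (blk a))) hu.
  rewrite piw_cons !drop_cat_le ?size_blk // -{1}(size_blk a) drop_size cat0s.
  by move=> ->.
set j0 := size P in hj.
have hD : drop j0 (blk a) ++ piw s u' = t ++ Y.
  have := congr1 (drop j0) hu.
  rewrite piw_cons drop_size_cat // => <-.
  by rewrite drop_cat_le // size_blk; exact: ltnW.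
have x0 : X := Tagged _ (Ordinal (hs a)).
have tpos : (0 < size t)%N by rewrite lt0n size_eq0.
have hE : forall U, prefix t (drop j0 (blk a) ++ piw s U) = prefix u' U.
  move=> U; case/lastP: u' hu hmin hD => [|u3 c] hu hmin hD.
    rewrite prefix0s; move: hD; rewrite piw_nil cats0 => ->.
    by rewrite -catA prefix_prefix.
  have hmin2 := hmin (a :: u3); rewrite /= size_rcons ltnS leqnn in hmin2.
  have {}hmin2 := hmin2 isT.
  rewrite piw_rcons catA in hD.
  set D := drop j0 (blk a) ++ piw s u3 in hD.
  have hlt : (size D < size t)%N.
    rewrite ltnNge; apply/negP => hle.
    have ht : take (size t) D = t.
      by rewrite -(take_cat_le (blk c) hle) hD take_cat ltnn subnn take0 cats0.
    case/negP: hmin2; rewrite piw_cons.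
    rewrite -(cat_take_drop j0 (blk a)) -catA.
    apply: infix_catl; rewrite -/D -ht.
    exact: prefixW (prefix_take _ _).
  have ht : t = D ++ take (size t - size D) (blk c).
    have := congr1 (take (size t)) hD.
    by rewrite take_cat ltnNge (ltnW hlt) /= take_cat ltnn subnn take0 cats0.
  rewrite ht /D -catA prefix_catr // eqxx /=.
  by apply: dec; rewrite subn_gt0.
elim=> [|b U IH].
  by rewrite piw_nil !occ_nil.
rewrite piw_cons occ_cat occ_cons IH; congr addn.
have hnz : forall i : 'I_(size (blk b)), prefix t (drop i (blk b) ++ piw s U) ->
    b = a /\ nat_of_ord i = j0.
  move=> i hp; have hi : (i < size (s b))%N by rewrite -size_blk.
  have := prefix_nth0 x0 hp tpos.
  rewrite nth0_blk_cat // => e.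
  have := prefix_nth0 x0 (prefix_prefix t Y) tpos.
  rewrite -hD nth0_blk_cat // e.
  by case/blk_nth_eq.
rewrite prefix_cons.
case: (eqVneq a b) => [eab|nab].
  subst b.
  have hj' : (j0 < size (blk a))%N by rewrite size_blk.
  rewrite (bigD1 (Ordinal hj')) //= hE big1 ?addn0 //.
  move=> i hi; case hp: (prefix _ _) => //.
  case: (hnz i hp) => _ e; case/eqP: hi; exact: val_inj.
rewrite /=; apply: big1 => i _; case hp: (prefix _ _) => //.
by case: (hnz i hp) => e _; rewrite e eqxx in nab.
Qed.

Lemma hatP (t : seq X) : match hat t with
  | Some u => infix t (piw s u) /\
      (forall u2, (size u2 < size u)%N -> ~~ infix t (piw s u2))
  | None => forall u, ~~ infix t (piw s u) end.
Proof.
rewrite /hat; case: pselect => [e|ne].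
  have [hm hmn] : hat_exists t (ex_minn e) /\
      (forall n, hat_exists t n -> (ex_minn e <= n)%N).
    by case: ex_minnP => m h1 h2; split.
  case: pickP => [u hu | hn] /=.
    split => // u2 hlt; apply/negP => hin.
    have : hat_exists t (size u2) by apply/existsP; exists (in_tuple u2).
    move/hmn; rewrite leqNgt; rewrite size_tuple in hlt; by rewrite hlt.
  by move: hm => /existsP [u hu]; rewrite hn in hu.
move=> u; apply/negP => hin; apply: ne; exists (size u).
by apply/existsP; exists (in_tuple u).
Qed.

Lemma occ_morph (w : seq B) U : w != [::] ->
  occ w (morph s U) =
  (\sum_(t : (size w).-tuple X | map (@alpha _ _ s) t == w)
     match hat (tval t) with Some u => occ u U | None => 0 end)%N.
Proof.
move=> wn; rewrite morph_piw occ_map; apply: eq_bigr => t /eqP ht.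
have tn : tval t != [::] by apply: contra wn => /eqP e; rewrite -ht e.
have := hatP t; case: (hat (tval t)) => [u [h1 h2]| hn].
  exact: key.
by apply: occ_noinfix.
Qed.

End Piw.

Unset Implicit Arguments.
Local Notation dcomp := Defs.comp.
Section Main.
Import numFieldNormedType.Exports.
Local Open Scope classical_set_scope.
Local Open Scope ring_scope.
Variables (R : realType) (A : nat -> finType)
  (s : forall n, A n.+1 -> seq (A n)) (v : forall n, A n -> R).
Hypotheses (hs : forall n, nonerasing (s n)) (hv : vector_tower s v).

Lemma comp_cat (k d : nat) (p q : seq (A (d + k))) : dcomp s k d (p ++ q) = dcomp s k d p ++ dcomp s k d q.
Proof.
elim: d p q => [|d IH] p q //=.
by rewrite /morph map_cat flatten_cat IH.
Qed.

Lemma comp_nil (k d : nat) : dcomp s k d [::] = [::].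
Proof. by elim: d => //= d IH. Qed.

Lemma comp1S k d (a : A (d.+1 + k)) : dcomp s k d.+1 [:: a] = dcomp s k d (s (d + k) a).
Proof. by rewrite /= /morph /= cats0. Qed.

Lemma sum_count n (G : A n -> R) (l : seq (A n)) :
  \sum_(x <- l) G x = \sum_(b : A n) (count_mem b l)%:R * G b.
Proof.
elim: l => [|x l IH].
  by rewrite big_nil; symmetry; apply: big1 => b _; rewrite mul0r.
rewrite big_cons IH /=.
under [in RHS]eq_bigr do rewrite natrD mulrDl.
rewrite big_split /=; congr (_ + _).
rewrite (bigD1 x) //= eqxx mul1r big1 ?addr0 // => b hb.
by rewrite eq_sym (negbTE hb) mul0r.
Qed.

Lemma tower n (G : A n -> R) :
  \sum_(a : A n.+1) v n.+1 a * \sum_(b <- s n a) G b = \sum_(b : A n) v n b * G b.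
Proof.
under eq_bigr do rewrite sum_count mulr_sumr.
rewrite exchange_big /=; apply: eq_bigr => b _.
rewrite [in RHS](proj2 (hv n b)) mulr_suml; apply: eq_bigr => a _.
by rewrite mulrA [v _ a * _]mulrC.
Qed.

Definition g k u d :=
  \sum_(a : A (d + k)) v (d + k) a * (occ u (dcomp s k d [:: a]))%:R.

Lemma sum_comp_ge k d u (p : seq (A (d + k))) : u != [::] ->
  \sum_(b <- p) (occ u (dcomp s k d [:: b]))%:R <= (occ u (dcomp s k d p))%:R :> R.
Proof.
move=> un; elim: p => [|b p IH]; first by rewrite big_nil ler0n.
rewrite big_cons (_ : b :: p = [:: b] ++ p) // comp_cat.
apply: le_trans (lerD (lexx _) IH) _.
by rewrite -natrD ler_nat; apply: occ_cat_ge.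
Qed.

Lemma size_comp_sum k d (p : seq (A (d + k))) :
  (size (dcomp s k d p))%:R = \sum_(b <- p) (size (dcomp s k d [:: b]))%:R :> R.
Proof.
elim: p => [|b p IH]; first by rewrite big_nil comp_nil.
by rewrite big_cons (_ : b :: p = [:: b] ++ p) // comp_cat size_cat natrD IH.
Qed.

Lemma g_mono k u : u != [::] -> nondecreasing_seq (g k u).
Proof.
move=> un; apply/nondecreasing_seqP => d; rewrite /g.
under [in X in _ <= X]eq_bigr do rewrite comp1S.
rewrite -(tower (d + k) (fun b => (occ u (dcomp s k d [:: b]))%:R)).
apply: ler_sum => a _; apply: ler_wpM2l; first exact: (proj1 (hv _ a)).
exact: sum_comp_ge.
Qed.

Lemma mass k d :
  \sum_(a : A (d + k)) v (d + k) a * (size (dcomp s k d [:: a]))%:R =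
  \sum_(a : A k) v k a.
Proof.
elim: d => [|d IH]; first by apply: eq_bigr => a _; rewrite /= mulr1.
under eq_bigr do rewrite comp1S size_comp_sum.
by rewrite (tower (d + k) (fun b => (size (dcomp s k d [:: b]))%:R)).
Qed.

Lemma g_cvg k u : u != [::] -> cvgn (g k u).
Proof.
move=> un; apply: nondecreasing_is_cvgn; first exact: g_mono.
exists (\sum_(a : A k) v k a) => _ [d _ <-].
rewrite -(mass k d); apply: ler_sum => a _.
apply: ler_wpM2l; first exact: (proj1 (hv _ a)).
by rewrite ler_nat occ_le.
Qed.

Definition castA {n1 n2 : nat} (e : n1 = n2) (a : A n1) : A n2 :=
  eq_rect n1 (fun n => A n) a n2 e.

Lemma castA_id n (e : n = n) (a : A n) : castA e a = a.
Proof. by rewrite (eq_irrelevance e erefl). Qed.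

Lemma map_castA_id n (e : n = n) (x : seq (A n)) : map (castA e) x = x.
Proof. by rewrite (eq_map (castA_id n e)) map_id. Qed.

Lemma sum_cast n1 n2 (e : n1 = n2) (F : A n2 -> R) :
  \sum_(a : A n2) F a = \sum_(a : A n1) F (castA e a).
Proof. by case: n2 / e F. Qed.

Lemma v_cast n1 n2 (e : n1 = n2) a : v n2 (castA e a) = v n1 a.
Proof. by case: n2 / e. Qed.

Lemma cast_morph n1 n2 (e : n1 = n2) (e' : n1.+1 = n2.+1) (u : seq (A n1.+1)) :
  map (castA e) (morph (s n1) u) = morph (s n2) (map (castA e') u).
Proof.
move: e'; case: n2 / e => e'.
by rewrite !map_castA_id.
Qed.

Lemma claim d k (u : seq (A (d + k.+1))) :
  dcomp s k d.+1 (map (castA (addnS d k)) u) = morph (s k) (dcomp s k.+1 d u).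
Proof.
elim: d u => [|d IH] u.
  change (morph (s k) (map (castA (addnS 0 k)) u) = morph (s k) u).
  by rewrite map_castA_id.
change (dcomp s k d.+1 (morph (s (d.+1 + k)) (map (castA (addnS d.+1 k)) u)) =
  morph (s k) (dcomp s k.+1 d (morph (s (d + k.+1)) u))).
by rewrite -(cast_morph _ _ (addnS d k) (addnS d.+1 k) u) IH.
Qed.

Lemma main_sec k (w : seq (A k)) : w != [::] ->
  transfer (s k) (level_meas s v k.+1) w = level_meas s v k w.
Proof.
move=> wn.
pose f := fun d => \sum_(a : A (d + k)) v (d + k) a * (occ w (dcomp s k d [:: a]))%:R.
have hf : forall d, f d.+1 =
    \sum_(t : (size w).-tuple _ | map (@alpha _ _ (s k)) t == w)
      match hat (tval t) with Some u => g k.+1 u d | None => 0 end.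
  move=> d; rewrite /f (@sum_cast (d + k.+1) (d.+1 + k) (addnS d k)).
  transitivity (\sum_(a : A (d + k.+1)) v _ a *
      (occ w (morph (s k) (dcomp s k.+1 d [:: a])))%:R).
    apply: eq_bigr => a _; rewrite v_cast; congr (_ * (occ w _)%:R).
    exact: (claim d k [:: a]).
  under eq_bigr do rewrite (occ_morph (hs k)) // natr_sum mulr_sumr.
  rewrite exchange_big /=; apply: eq_bigr => t _.
  case: (hat (tval t)) => [u|] //=.
  by apply: big1 => a _; rewrite mulr0.
have hc : f @ \oo --> transfer (s k) (level_meas s v k.+1) w.
  rewrite -cvg_shiftS /=.
  have -> : (fun n => f n.+1) = (fun d =>
    \sum_(t : (size w).-tuple _ | map (@alpha _ _ (s k)) t == w)
      match hat (tval t) with Some u => g k.+1 u d | None => 0 end).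
    by apply/funext => d; rewrite hf.
  rewrite /transfer; apply: cvg_big; first exact: add_continuous.
  move=> t /eqP ht.
  have := hatP (tval t).
  case: (hat (tval t)) => [u [hin _]|_]; last exact: cvg_cst.
  have un : u != [::].
    apply/negP => /eqP u0; move: hin; rewrite u0 piw_nil infixs0 => /eqP t0.
    by move: wn; rewrite -ht t0.
  exact: (g_cvg _ _ un).
rewrite /level_meas -/f.
exact/esym/cvg_lim.
Qed.

End Main.

Theorem lemma5p2 (R : realType) (A : nat -> finType)
  (s : forall n, A n.+1 -> seq (A n)) (v : forall n, A n -> R) :
  (forall n, nonerasing (s n)) ->
  everywhere_growing s ->
  vector_tower s v ->
  forall (k : nat) (w : seq (A k)), w != [::] ->
    transfer (s k) (level_meas s v k.+1) w = level_meas s v k w.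
Proof.
move=> hs _ hv k w wn.
exact: (@main_sec R A s v hs hv k w wn).
Qed.
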